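(* Let $v$ be a Llull matrix on a finite set $A$ with path scores $v^*$, and let $x,y,z\in A$ be pairwise distinct. If $v^*_{yz}>v^*_{xz}$, then $v^*_{xz}\ge v^*_{xy}$. If $v^*_{xy}>v^*_{xz}$, then $v^*_{xz}\ge v^*_{yz}$.
   Context: A Llull matrix on $A$ is a family of real numbers $v_{xy}\in[0,1]$, indexed by ordered pairs $(x,y)$ of distinct elements of $A$, with $v_{xy}+v_{yx}\le1$. The path scores are $v^*_{xy}=\max\min(v_{x_0x_1},\dots,v_{x_{m-1}x_m})$, the maximum over all paths $x_0x_1\dots x_m$ with $m\ge1$, $x_0=x$, $x_m=y$ and the $x_i$ pairwise distinct. *)

(* Defs.v *)
From mathcomp Require Import all_boot all_order all_algebra.
From mathcomp Require Import reals.
Set Implicit Arguments. Unset Strict Implicit. Unset Printing Implicit Defensive.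
Import Order.TTheory GRing.Theory Num.Theory.
Local Open Scope ring_scope.

Definition llull_matrix (R : realType) (A : finType) (v : A -> A -> R) : Prop :=
  forall x y : A, x != y ->
    [/\ 0 <= v x y, v x y <= 1 & v x y + v y x <= 1].

(* min of v over consecutive pairs of the path x :: s (ending at last x s);
   default 1 is never reached for nonempty s since all values are <= 1. *)
Fixpoint path_min (R : realType) (A : finType) (v : A -> A -> R)
    (x : A) (s : seq A) : R :=
  match s with
  | [::] => 1
  | y :: s' => Num.min (v x y) (path_min v y s')
  end.

(* Intermediate vertices t form an
   n-tuple with n < #|A|; uniqueness of x :: t ++ [y] forces distinctness.
   The outer max starts from 0, which is harmless since all scores are >= 0
   and (for x != y) the direct path exists. *)
Definition path_score (R : realType) (A : finType) (v : A -> A -> R)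
    (x y : A) : R :=
  \big[Num.max/0]_(n < #|A|)
    \big[Num.max/0]_(t : n.-tuple A | uniq (x :: rcons t y))
       path_min v x (rcons t y).

(* Main.v *)
Require Import Defs.
From mathcomp Require Import all_boot all_order all_algebra.
From mathcomp Require Import reals.
Import Order.TTheory GRing.Theory Num.Theory.
Local Open Scope ring_scope.

Section S.
Variables (R : realType) (A : finType) (v : A -> A -> R).

Lemma pm_le1 x s : path_min v x s <= 1.
Proof. elim: s x => [|y s IH] x /=; first by []. by rewrite ge_min IH orbT. Qed.

Lemma pm_cat x s1 s2 :
  path_min v x (s1 ++ s2) = Num.min (path_min v x s1) (path_min v (last x s1) s2).
Proof.
elim: s1 x => [|y s IH] x /=.
  by apply/esym/min_idPr; apply: pm_le1.
by rewrite IH minA.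
Qed.

Lemma pm_suffix x s1 s2 : path_min v x (s1 ++ s2) <= path_min v (last x s1) s2.
Proof. by rewrite pm_cat ge_min lexx orbT. Qed.

Lemma shorten_walk x s : exists t,
  [/\ uniq (x :: t), last x t = last x s & path_min v x s <= path_min v x t].
Proof.
elim: s x => [|y s IH] x; first by exists [::].
have [t [ut lt pt]] := IH y.
have [exy|nxy] := eqVneq x y.
  subst y; exists t; split => //=; by rewrite ge_min pt orbT.
case xt: (x \in t).
  move: xt ut lt pt => /splitPr [t1 t2] ut lt pt.
  exists t2; split.
  - by move: ut => /= /andP[_]; rewrite cat_uniq => /and3P[_ _ /= ->].
  - by move: lt; rewrite /= last_cat /=.
  - rewrite /= ge_min; apply/orP; right; apply: le_trans pt _.
    have := pm_suffix y t1 (x :: t2). rewrite /=.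
    move=> _. rewrite pm_cat /= ge_min; apply/orP; right.
    by rewrite ge_min lexx orbT.
exists (y :: t); split.
- by move: ut; rewrite /= in_cons negb_or nxy xt => ->.
- by rewrite /= lt.
- rewrite /= le_min ge_min lexx /= ge_min pt orbT //.
Qed.

Lemma bigmax_ge (I : finType) (P : pred I) (F : I -> R) i0 c :
  P i0 -> c <= F i0 -> c <= \big[Num.max/0]_(i | P i) F i.
Proof.
move=> Pi cF; rewrite /index_enum; have : i0 \in (index_enum I) by rewrite mem_index_enum.
rewrite /index_enum; elim: (Finite.enum I) => [|j r IH] //=.
rewrite in_cons big_cons => /orP[/eqP <-|ir]; first by rewrite Pi le_max cF.
by case: (P j); rewrite ?le_max IH ?orbT.
Qed.

Lemma bigmax_ge0 (I : Type) (r : seq I) (P : pred I) (F : I -> R) :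
  0 <= \big[Num.max/0]_(i <- r | P i) F i.
Proof.
elim: r => [|j r IH]; first by rewrite big_nil.
by rewrite big_cons; case: (P j); rewrite ?le_max IH ?orbT.
Qed.

Lemma score_ge0 x z : 0 <= path_score v x z.
Proof. exact: bigmax_ge0. Qed.

Lemma score_ge x z t : x != z -> uniq (x :: t) -> last x t = z ->
  path_min v x t <= path_score v x z.
Proof.
move=> nxz; case/lastP: t => [|t w] /=; first by move=> _ e; rewrite e eqxx in nxz.
rewrite last_rcons => ut ew; subst w.
have hs : (size t < #|A|)%N.
  have := uniq_leq_size (s1 := x :: rcons t z) (s2 := enum A) ut.
  rewrite /= size_rcons cardE => H.
  have h : ((size t).+1 < size (enum A))%N by apply: H => a _; rewrite mem_enum.
  by apply: leq_trans h; rewrite ltnS leqnSn.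
apply: (@bigmax_ge _ _ _ (Ordinal hs)) => //.
apply: (@bigmax_ge _ _ _ (in_tuple t)) => //.
Qed.

Lemma triangle x y z : x != z ->
  Num.min (path_score v x y) (path_score v y z) <= path_score v x z.
Proof.
move=> nxz.
apply: (big_ind (fun m => Num.min m (path_score v y z) <= path_score v x z)).
- by rewrite ge_min score_ge0.
- by move=> a b ha hb; case: (leP a b).
move=> n _.
apply: (big_ind (fun m => Num.min m (path_score v y z) <= path_score v x z)).
- by rewrite ge_min score_ge0.
- by move=> a b ha hb; case: (leP a b).
move=> t1 u1; rewrite minC.
apply: (big_ind (fun m => Num.min m _ <= path_score v x z)).
- by rewrite ge_min score_ge0.
- by move=> a b ha hb; case: (leP a b).
move=> m _.
apply: (big_ind (fun m => Num.min m _ <= path_score v x z)).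
- by rewrite ge_min score_ge0.
- by move=> a b ha hb; case: (leP a b).
move=> t2 u2.
have := pm_cat x (rcons t1 y) (rcons t2 z).
rewrite last_rcons minC => <-.
have [t [ut lt pt]] := shorten_walk x (rcons t1 y ++ rcons t2 z).
apply: le_trans pt _; apply: score_ge => //.
by rewrite lt last_cat !last_rcons.
Qed.
End S.

Theorem lemma2p6 (R : realType) (A : finType) (v : A -> A -> R)
  (hv : llull_matrix v) (x y z : A)
  (hxy : x != y) (hyz : y != z) (hxz : x != z) :
  (path_score v x z < path_score v y z -> path_score v x y <= path_score v x z) /\
  (path_score v x z < path_score v x y -> path_score v y z <= path_score v x z).
Proof.
have T := @triangle R A v x y z hxz.
split=> h; rewrite leNgt; apply/negP => h2; move: T; rewrite ge_min.
- by case/orP; [move/(lt_le_trans h2); rewrite ltxx | move/(lt_le_trans h); rewrite ltxx].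
- by case/orP; [move/(lt_le_trans h); rewrite ltxx | move/(lt_le_trans h2); rewrite ltxx].
Qed.
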